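(* Let $G$ be a simple planar brick with six vertices. Then $G$ is wheel-like if and only if $G$ is isomorphic to the wheel $W_5$.
   Context: A graph is matching covered if it is connected, has at least two vertices, and every edge lies in a perfect matching. A cut $\partial(X)$ (edges with exactly one end in $X$) is tight if every perfect matching contains exactly one of its edges, trivial if one side has one vertex. A brick is a nonbipartite matching covered graph whose tight cuts are all trivial. An edge $e$ is removable if $G-e$ is matching covered; a pair $\{e,f\}$ is a removable doubleton if $G-e-f$ is matching covered but neither $G-e$ nor $G-f$ is; these are the removable classes. A brick $G$ is wheel-like if there is a vertex $h$ such that every removable class contains an edge incident with $h$. The wheel $W_5$ is obtained from a $5$-cycle by adding a new vertex adjacent to all five cycle vertices. *)

(* Defs.v *)
From mathcomp Require Import all_boot all_fingroup.
Set Implicit Arguments. Unset Strict Implicit. Unset Printing Implicit Defensive.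

Section Graphs.
Variable T : finType.
Implicit Types (E M : {set {set T}}) (X : {set T}).

Definition simple_edges E := forall f, f \in E -> #|f| = 2.

Definition adj E : rel T := fun u v => [set u; v] \in E.

Definition connected E := forall x y : T, connect (adj E) x y.

Definition perfect_matching E M :=
  M \subset E /\ forall v : T, #|[set f in M | v \in f]| = 1.

Definition matching_covered E :=
  connected E /\ 1 < #|T| /\
  forall f, f \in E -> exists M, perfect_matching E M /\ f \in M.

Definition cut E X := [set f in E | #|f :&: X| == 1].

Definition tight_cut E X :=
  forall M, perfect_matching E M -> #|M :&: cut E X| = 1.

Definition trivial_cut X := #|X| = 1 \/ #|~: X| = 1.

Definition bipartite E := exists X, E \subset cut E X.

Definition brick E :=
  matching_covered E /\ ~ bipartite E /\
  forall X, tight_cut E X -> trivial_cut X.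

Definition removable E f := f \in E /\ matching_covered (E :\ f).

Definition removable_doubleton E f g :=
  f \in E /\ g \in E /\ f != g /\
  matching_covered (E :\ f :\ g) /\
  ~ matching_covered (E :\ f) /\ ~ matching_covered (E :\ g).

Definition wheel_like E :=
  exists h : T,
    (forall f, removable E f -> h \in f) /\
    (forall f g, removable_doubleton E f g -> (h \in f) \/ (h \in g)).

(* Planarity, combinatorially: a rotation system (a permutation [s] of the
   darts cyclically permuting the darts leaving each vertex) whose faces
   (orbits of the face-tracing map d |-> s (reverse d)) satisfy Euler's
   formula V - E + F = 2.  This is the genus-0 criterion for connected graphs
   (all graphs considered here are bricks, hence connected). *)
Definition dart E (d : T * T) := [set d.1; d.2] \in E.

Definition rotation_system E (s : {perm (T * T)}) :=
  [/\ forall d, ~~ dart E d -> s d = d,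
      forall d, dart E d -> (s d).1 = d.1 /\ dart E (s d)
    & forall d d', dart E d -> dart E d' -> d.1 = d'.1 ->
        exists k, iter k s d = d'].

Definition face_map E (s : {perm (T * T)}) (d : T * T) : T * T :=
  if dart E d then s (d.2, d.1) else d.

Definition nfaces E (s : {perm (T * T)}) :=
  #|[set [set d' | fconnect (face_map E s) d d'] | d in [set d | dart E d]]|.

Definition planar E :=
  exists s : {perm (T * T)}, rotation_system E s /\ #|T| + nfaces E s = #|E| + 2.

End Graphs.

(* The wheel W_5 on vertex set 'I_6: hub 0, rim cycle 1-2-3-4-5-1. *)
Definition w5adj (i j : 'I_6) : bool :=
  (i != j) &&
  [|| (i == 0 :> nat), (j == 0 :> nat),
      ((i + 5 - j) %% 5 == 1) | ((j + 5 - i) %% 5 == 1)].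

Definition W5 : {set {set 'I_6}} :=
  [set [set p.1; p.2] | p in [set p : 'I_6 * 'I_6 | w5adj p.1 p.2]].

Definition isomorphic (T T' : finType) (E : {set {set T}}) (E' : {set {set T'}}) :=
  exists phi : T -> T', bijective phi /\
    forall x y : T, ([set x; y] \in E) = ([set phi x; phi y] \in E').

(* Main.v *)
Require Import Defs.
From mathcomp Require Import all_boot all_fingroup.

Notation edge := (nat * nat)%type.

Fixpoint allS {A} (a : A -> bool) (s : seq A) :=
  if s is x :: s' then (if a x then allS a s' else false) else true.
Fixpoint hasS {A} (a : A -> bool) (s : seq A) :=
  if s is x :: s' then (if a x then true else hasS a s') else false.
Fixpoint memS (e : edge) (s : seq edge) :=
  if s is x :: s' then (if e == x then true else memS e s') else false.

Definition Kp : seq edge :=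
  [:: (0,1);(0,2);(0,3);(0,4);(0,5);(1,2);(1,3);(1,4);(1,5);(2,3);(2,4);(2,5);(3,4);(3,5);(4,5)].
Definition inK v (e : edge) := (v == e.1) || (v == e.2).
Definition subm (p g : seq edge) := allS (fun e => memS e g) p.
Fixpoint allsub (s : seq edge) : seq (seq edge) :=
  if s is x :: s' then let r := allsub s' in r ++ [seq x :: l | l <- r] else [:: [::]].
Fixpoint allbl n : seq (seq bool) :=
  if n is n'.+1 then [seq b :: l | b <- [:: false; true], l <- allbl n'] else [:: [::]].
Definition pm_b (m : seq edge) := allS (fun v => count (inK v) m == 1) (iota 0 6).
Definition PM15 : seq (seq edge) :=
[:: [:: (0,5); (1,4); (2,3)];
 [:: (0,4); (1,5); (2,3)];
 [:: (0,5); (1,3); (2,4)];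
 [:: (0,3); (1,5); (2,4)];
 [:: (0,4); (1,3); (2,5)];
 [:: (0,3); (1,4); (2,5)];
 [:: (0,5); (1,2); (3,4)];
 [:: (0,2); (1,5); (3,4)];
 [:: (0,1); (2,5); (3,4)];
 [:: (0,4); (1,2); (3,5)];
 [:: (0,2); (1,4); (3,5)];
 [:: (0,1); (2,4); (3,5)];
 [:: (0,3); (1,2); (4,5)];
 [:: (0,2); (1,3); (4,5)];
 [:: (0,1); (2,3); (4,5)]].
Definition rme f (g : seq edge) := [seq e <- g | e != f].
Definition pms g := [seq p <- PM15 | subm p g].
Definition mcwP (P : seq (seq edge)) (g : seq edge) := allS (fun e => hasS (fun p => memS e p) P) g.
Definition mcw_b g := mcwP (pms g) g.
Definition stepb (g : seq edge) (R : seq bool) :=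
  foldl (fun R e => if nth false R e.1 || nth false R e.2
     then set_nth false (set_nth false R e.1 true) e.2 true else R) R g.
Definition connb g := let R := iter 5 (stepb g) [:: true; false; false; false; false; false] in
   allS (fun v => nth false R v) (iota 0 6).
Definition cross (X : seq bool) (e : edge) := nth false X e.1 != nth false X e.2.
Definition nontriv (X : seq bool) :=
  (count (nth false X) (iota 0 6) != 1) && (count (fun i => ~~ nth false X i) (iota 0 6) != 1).
Definition tight_b g := let P := pms g in
  allS (fun X => if nontriv X then hasS (fun p => count (cross X) p != 1) P else true) (allbl 6).
Definition wl_b g := let P := pms g in
  let R := [seq f <- g | if mcwP [seq p <- P | f \notin p] (rme f g) then connb (rme f g) else false] in
  let N := [seq f <- g | ~~ mcwP [seq p <- P | f \notin p] (rme f g)] in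
  let D := [seq q <- [seq (f, f') | f <- N, f' <- N] | if q.1 != q.2 then
     (if mcwP [seq p <- [seq p <- P | q.1 \notin p] | q.2 \notin p] (rme q.2 (rme q.1 g))
      then connb (rme q.2 (rme q.1 g)) else false) else false] in
  hasS (fun h => if allS (inK h) R then allS (fun p => inK h p.1 || inK h p.2) D else false) (iota 0 6).
Definition wlrev_b g := let P := pms g in
  let R := [seq f <- g | mcwP [seq p <- P | f \notin p] (rme f g)] in
  let N := [seq f <- g | ~~ (if mcwP [seq p <- P | f \notin p] (rme f g) then connb (rme f g) else false)] in
  let D := [seq q <- [seq (f, f') | f <- N, f' <- N] | if q.1 != q.2 then
     mcwP [seq p <- [seq p <- P | q.1 \notin p] | q.2 \notin p] (rme q.2 (rme q.1 g)) else false] in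
  hasS (fun h => if allS (inK h) R then allS (fun p => inK h p.1 || inK h p.2) D else false) (iota 0 6).
Definition w5n a b := (a != b) && [|| a == 0, b == 0, (a + 5 - b) %% 5 == 1 | (b + 5 - a) %% 5 == 1].
Definition iso_check (g : seq edge) (pi : seq nat) :=
  allS (fun e => memS e g == w5n (nth 0 pi e.1) (nth 0 pi e.2)) Kp.
Fixpoint allL n m : seq (seq nat) :=
  if n is n'.+1 then [seq a :: l | a <- iota 0 m, l <- allL n' m] else [:: [::]].
Definition perms6 := [seq l <- allL 6 6 | uniq l].
Definition w5rel (pi : seq nat) := [seq e <- Kp | w5n (nth 0 pi e.1) (nth 0 pi e.2)].
Definition main_b := let P := perms6 in
  allS (fun g => if mcw_b g then if tight_b g then if wl_b g then hasS (iso_check g) P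
     else true else true else true) (allsub Kp).

Lemma PM15_ok : allS (fun m => if pm_b m then m \in PM15 else true) (allsub Kp).
Proof. vm_compute. reflexivity. Qed.
Lemma PM15_pm : all (fun p => pm_b p && (p == [seq e <- Kp | e \in p])) PM15.
Proof. vm_compute. reflexivity. Qed.
Lemma main_comp : main_b.
Proof. vm_compute. reflexivity. Qed.
Lemma rev_comp : allS (fun pi => wlrev_b (w5rel pi)) perms6.
Proof. vm_compute. reflexivity. Qed.


Lemma allSE {A} (a : A -> bool) s : allS a s = all a s.
Proof. by elim: s => //= x s ->; case: (a x). Qed.
Lemma hasSE {A} (a : A -> bool) s : hasS a s = has a s.
Proof. by elim: s => //= x s ->; case: (a x). Qed.
Lemma memSE e s : memS e s = (e \in s).
Proof. by elim: s => //= x s ->; rewrite in_cons; case: (e == x). Qed.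

Lemma filter_allsub (a : pred edge) s : filter a s \in allsub s.
Proof.
elim: s => [|x s IH] //=; rewrite mem_cat; case: (a x).
  by rewrite (map_f (cons x)) ?orbT.
by rewrite IH.
Qed.

Lemma allLP n m l : reflect (size l = n /\ all (fun a => a < m) l) (l \in allL n m).
Proof.
elim: n l => [|n IH] l /=.
  by case: l => [|x l]; constructor => //; case.
apply: (iffP allpairsP).
  case=> [[a l']] /= [Ha /IH [Hs Hl] ->] /=; split; first by rewrite Hs.
  by rewrite Hl andbT; move: Ha; rewrite mem_iota add0n.
case: l => [|a l] //=; first by case.
case=> [[Hs]] /andP [Ha Hl]; exists (a, l) => /=; split => //.
  by rewrite mem_iota.
by apply/IH.
Qed.

Lemma PM15_ok' : all (fun m => pm_b m ==> (m \in PM15)) (allsub Kp).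
Proof. by rewrite -allSE; exact: PM15_ok. Qed.

Lemma allP_S {A : eqType} (a : pred A) s : reflect {in s, forall x, a x} (allS a s).
Proof. by rewrite allSE; exact: allP. Qed.

Lemma pms_rm g f : pms (rme f g) = [seq p <- pms g | f \notin p].
Proof.
rewrite /pms -filter_predI; apply: eq_filter => p /=; rewrite /subm !allSE.
have -> : all (fun e => memS e (rme f g)) p = all (fun e => e != f) p && all (fun e => memS e g) p.
  by rewrite -all_predI; apply: eq_all => e; rewrite /= !memSE mem_filter.
congr andb; by elim: p => //= e p ->; rewrite in_cons negb_or eq_sym.
Qed.

Lemma Kp_ok : all (fun e => (e.1 < 6) && (e.2 < 6) && (e.1 != e.2)) Kp.
Proof. by []. Qed.
Lemma Kp_uniq : uniq Kp. Proof. by []. Qed.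
Lemma Kp_sep : all (fun e => all (fun e' =>
  all (fun v => inK v e == inK v e') (iota 0 6) ==> (e == e')) Kp) Kp.
Proof. vm_compute. reflexivity. Qed.
Lemma Kp_pairs : all (fun i => all (fun j => (i != j) ==>
  has (fun e => (e == (i,j)) || (e == (j,i))) Kp) (iota 0 6)) (iota 0 6).
Proof. vm_compute. reflexivity. Qed.

Lemma Kp_lt e : e \in Kp -> [/\ e.1 < 6, e.2 < 6 & e.1 != e.2].
Proof. by move/(allP Kp_ok) => /andP[/andP[]]. Qed.

Section Bridge.
Variable T : finType.
Variable x0 : T.
Hypothesis H6 : #|T| = 6.

Definition psi (n : nat) : T := nth x0 (enum T) n.
Definition phi (x : T) : nat := index x (enum T).
Definition eK (e : edge) : {set T} := [set psi e.1; psi e.2].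
Definition sl (S : {set {set T}}) := [seq e <- Kp | eK e \in S].

Lemma size_enumT : size (enum T) = 6.
Proof. by rewrite -cardE. Qed.
Lemma phi_lt x : phi x < 6.
Proof. by rewrite -size_enumT index_mem mem_enum. Qed.
Lemma psiK x : psi (phi x) = x.
Proof. by rewrite /psi /phi nth_index ?mem_enum. Qed.
Lemma phiK i : i < 6 -> phi (psi i) = i.
Proof. by move=> Hi; rewrite /psi /phi index_uniq ?enum_uniq ?size_enumT. Qed.
Lemma eq_psi x i : i < 6 -> (x == psi i) = (phi x == i).
Proof.
move=> Hi; apply/eqP/eqP => [->|<-]; first by rewrite phiK.
by rewrite psiK.
Qed.
Lemma inK_mem x e : e \in Kp -> (x \in eK e) = inK (phi x) e.
Proof. by case/Kp_lt => H1 H2 _; rewrite !inE !eq_psi. Qed.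
Lemma eK_card e : e \in Kp -> #|eK e| = 2.
Proof.
case/Kp_lt => H1 H2 H3; rewrite cards2 eq_psi // phiK //.
by rewrite H3.
Qed.
Lemma eK_inj : {in Kp &, injective eK}.
Proof.
move=> e e' He He' Heq.
have H v : v < 6 -> inK v e = inK v e'.
  by move=> Hv; rewrite -(@phiK v Hv) -!inK_mem // Heq.
apply/eqP; move: (allP Kp_sep e He) => /allP/(_ e' He') /implyP; apply.
by apply/allP => v; rewrite mem_iota => /andP[_ Hv]; rewrite H.
Qed.
Lemma eK_pair x y : x != y ->
  exists2 e, e \in Kp & (e = (phi x, phi y) \/ e = (phi y, phi x)).
Proof.
move=> Hxy.
have Hij : phi x != phi y.
  by apply: contra Hxy => /eqP H; rewrite -(psiK x) H psiK.
have := allP Kp_pairs (phi x); rewrite mem_iota phi_lt => /(_ isT) /allP.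
move/(_ (phi y)); rewrite mem_iota phi_lt => /(_ isT); rewrite Hij implyTb.
by case/hasP => e He /orP[] /eqP Ee; exists e => //; [left|right].
Qed.
Lemma eK_surj {f : {set T}} : #|f| = 2 -> exists2 e, e \in Kp & f = eK e.
Proof.
move/eqP/cards2P => [x [y [Hxy ->]]].
case: (@eK_pair x y Hxy) => e He [] Ee; exists e => //; rewrite /eK Ee /= !psiK //.
by rewrite setUC.
Qed.

Lemma sl_mem S e : e \in Kp -> (e \in sl S) = (eK e \in S).
Proof. by move=> He; rewrite mem_filter He andbT. Qed.
Lemma sl_Kp {S e} : e \in sl S -> e \in Kp.
Proof. by rewrite mem_filter => /andP[]. Qed.

Lemma card_sl (S : {set {set T}}) (P : pred {set T}) : simple_edges S ->
  #|[set f in S | P f]| = count (fun e => P (eK e)) (sl S).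
Proof.
move=> HS.
set s := [seq eK e | e <- [seq e <- sl S | P (eK e)]].
have Us : uniq s.
  rewrite map_inj_in_uniq ?filter_uniq ?Kp_uniq //.
  move=> e e' /[!mem_filter] /and3P[_ _ He] /and3P[_ _ He'].
  exact: eK_inj.
rewrite -size_filter -(size_map eK) -/s -(card_uniqP Us).
apply: eq_card => f; rewrite inE; apply/andP/mapP.
  case=> fS Pf; case: (eK_surj (HS f fS)) => e He Ef.
  by exists e => //; rewrite mem_filter -Ef Pf sl_mem // -Ef.
case=> e; rewrite mem_filter => /andP[Pe He] ->.
by rewrite -sl_mem ?(sl_Kp He).
Qed.

Lemma card_phi (Q : pred nat) : #|[set x : T | Q (phi x)]| = count Q (iota 0 6).
Proof.
set s := [seq psi i | i <- [seq i <- iota 0 6 | Q i]].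
have Us : uniq s.
  rewrite map_inj_in_uniq ?filter_uniq ?iota_uniq //.
  move=> i j /[!mem_filter] /andP[_] /[!mem_iota] /andP[_ Hi] /andP[_] /andP[_ Hj] Hij.
  by rewrite -(@phiK i Hi) Hij phiK.
rewrite -size_filter -(size_map psi) -/s -(card_uniqP Us).
apply: eq_card => x; rewrite inE; apply/idP/mapP.
  move=> Qx; exists (phi x); last by rewrite psiK.
  by rewrite mem_filter Qx mem_iota phi_lt.
case=> i; rewrite mem_filter mem_iota => /andP[Qi /andP[_ Hi]] ->.
by rewrite phiK.
Qed.

Lemma card2I (x y : T) (A : {set T}) : x != y ->
  #|[set x; y] :&: A| = (x \in A) + (y \in A).
Proof.
move=> Hxy; case Hx: (x \in A); case Hy: (y \in A).
- have -> : [set x; y] :&: A = [set x; y].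
    by apply/setIidPl/subsetP => z; rewrite !inE => /orP[] /eqP ->.
  by rewrite cards2 Hxy.
- have -> : [set x; y] :&: A = [set x].
    apply/setP => z; rewrite !inE; case: (eqVneq z x) => [->|Hzx] //=.
    by case: (eqVneq z y) => [->|] //=; rewrite Hy.
  by rewrite cards1.
- have -> : [set x; y] :&: A = [set y].
    apply/setP => z; rewrite !inE; case: (eqVneq z y) => [->|Hzy] //=; rewrite ?orbT //.
    by case: (eqVneq z x) => [->|] //=; rewrite Hx.
  by rewrite cards1.
- have -> : [set x; y] :&: A = set0.
    apply/setP => z; rewrite !inE; case: (eqVneq z y) => [->|Hzy] //=; rewrite ?Hy ?andbF ?orbT //.
    by case: (eqVneq z x) => [->|] //=; rewrite Hx.
  by rewrite cards0.
Qed.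

Lemma pm_sl (E M : {set {set T}}) : simple_edges E -> perfect_matching E M ->
  sl M \in pms (sl E).
Proof.
move=> HE [HME Hv].
have HM : simple_edges M by move=> f /(subsetP HME) /HE.
have Hpm : pm_b (sl M).
  rewrite /pm_b allSE; apply/allP => v; rewrite mem_iota => /andP[_ Hv6].
  have := Hv (psi v); rewrite card_sl // => <-.
  apply/eqP/eq_in_count => e /sl_Kp He.
  by rewrite /= inK_mem // phiK.
rewrite mem_filter; apply/andP; split.
  rewrite /subm allSE; apply/allP => e He; rewrite memSE.
  have HK := sl_Kp He; rewrite sl_mem // in He.
  by rewrite sl_mem // (subsetP HME).
have := allP PM15_ok' (sl M) (filter_allsub _ _).
by rewrite Hpm.
Qed.

Definition Mp (p : seq edge) : {set {set T}} := [set f in map eK p].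

Lemma Mp_pm (E : {set {set T}}) p : p \in pms (sl E) ->
  perfect_matching E (Mp p) /\ sl (Mp p) = p.
Proof.
rewrite mem_filter => /andP[Hsub HP].
have /andP[Hpm /eqP Hp] := allP PM15_pm p HP.
have pK : {subset p <= Kp} by move=> e; rewrite Hp mem_filter => /andP[].
have Hsl : sl (Mp p) = p.
  rewrite {2}Hp /sl; apply: eq_in_filter => e He; rewrite inE.
  apply/mapP/idP => [[e' He' Ee]|Hep]; last by exists e.
  by rewrite (eK_inj _ _ He (pK _ He') Ee).
have Hs : simple_edges (Mp p).
  by move=> f; rewrite inE => /mapP[e /pK He ->]; exact: eK_card.
split => //; split.
  apply/subsetP => f; rewrite inE => /mapP[e He ->].
  move: Hsub; rewrite /subm allSE => /allP/(_ e He); rewrite memSE.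
  by rewrite sl_mem ?pK.
move=> v; rewrite card_sl // Hsl.
have := (elimT (allP_S _ _) Hpm) (phi v); rewrite mem_iota phi_lt => /(_ isT) /eqP <-.
apply: eq_in_count => e /pK He; exact: inK_mem.
Qed.

Lemma mc_complete {E : {set {set T}}} : simple_edges E -> matching_covered E -> mcw_b (sl E).
Proof.
move=> HE [_ [_ Hmc]]; rewrite /mcw_b /mcwP allSE; apply/allP => e He.
have HK := sl_Kp He; rewrite sl_mem // in He.
case: (Hmc _ He) => M [HM HeM]; rewrite hasSE; apply/hasP; exists (sl M).
  exact: pm_sl.
by rewrite memSE sl_mem.
Qed.

Lemma conn_sound (E : {set {set T}}) g : {subset g <= sl E} -> connb g -> connected E.
Proof.
move=> Hg.
pose C v := connect (adj E) (psi 0) (psi v).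
pose Inv (R : seq bool) := forall v, nth false R v -> v < 6 /\ C v.
have Hstep : forall l R, {subset l <= g} -> Inv R -> Inv (foldl (fun R e =>
      if nth false R e.1 || nth false R e.2
      then set_nth false (set_nth false R e.1 true) e.2 true else R) R l).
  elim=> [|e l IH] R Hl HR //=; apply: IH; first by move=> z Hz; apply: Hl; rewrite in_cons Hz orbT.
  have /Hg He : e \in g by apply: Hl; rewrite in_cons eqxx.
  have HK := sl_Kp He; rewrite sl_mem // in He.
  case/Kp_lt: HK => Ha Hb _.
  case Hab: (nth false R e.1 || nth false R e.2) => //.
  have [Ca Cb] : C e.1 /\ C e.2.
    case/orP: Hab => /HR [_ Hc].
      split => //; apply: connect_trans Hc (connect1 _); exact: He.
    split => //; apply: connect_trans Hc (connect1 _).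
    by rewrite /adj setUC; exact: He.
  move=> v; rewrite nth_set_nth /= nth_set_nth /=.
  case: (eqVneq v e.2) => [->|_] //; case: (eqVneq v e.1) => [->|_] //.
  exact: HR.
have Hiter : forall n, Inv (iter n (stepb g) [:: true; false; false; false; false; false]).
  elim=> [|n IH] /=; last by apply: Hstep.
  case=> [|[|[|[|[|[|v]]]]]] //=; last by rewrite nth_nil.
  by move=> _; split => //; exact: connect0.
move=> Hc.
have HC : forall v, v < 6 -> C v.
  move=> v Hv; move: Hc; rewrite /connb allSE => /allP/(_ v); rewrite mem_iota Hv => /(_ isT).
  by case/Hiter.
have Hsym : connect_sym (adj E) by apply: sym_connect_sym => u w; rewrite /adj setUC.
move=> x y; apply: (@connect_trans _ _ (psi 0)).
  by rewrite Hsym -(psiK x); apply: HC; exact: phi_lt.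
by rewrite -(psiK y); apply: HC; exact: phi_lt.
Qed.

Lemma mc_sound {E : {set {set T}}} : simple_edges E -> mcw_b (sl E) -> connb (sl E) ->
  matching_covered E.
Proof.
move=> HE Hmc Hc; split; first exact: (@conn_sound E (sl E)).
split; first by rewrite H6.
move=> f Hf; case: (eK_surj (HE f Hf)) => e HK Ef.
have He : e \in sl E by rewrite sl_mem // -Ef.
move: Hmc; rewrite /mcw_b /mcwP allSE => /allP/(_ e He); rewrite hasSE => /hasP[p Hp Hep].
case: (@Mp_pm E p Hp) => Hpm _; exists (Mp p); split => //.
by rewrite inE Ef map_f // -memSE.
Qed.

Lemma sl_rm (E : {set {set T}}) f : f \in Kp -> sl (E :\ eK f) = rme f (sl E).
Proof.
move=> Hf; rewrite /rme /sl -filter_predI; apply: eq_in_filter => e He.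
by rewrite /= in_setD1 (inj_in_eq eK_inj).
Qed.



Lemma simple_rm {E : {set {set T}}} {f} : simple_edges E -> simple_edges (E :\ f).
Proof. by move=> HE f' /setD1P [_ /HE]. Qed.

Lemma tight_from (E : {set {set T}}) : simple_edges E ->
  (forall X, tight_cut E X -> trivial_cut X) -> tight_b (sl E).
Proof.
move=> HE Ht; rewrite /tight_b allSE; apply/allP => X _.
case Hn: (nontriv X) => //; rewrite hasSE.
apply/negPn/negP => /hasPn Hall.
pose XT := [set x | nth false X (phi x)].
have Htc : tight_cut E XT.
  move=> M HM.
  have Hsl := @pm_sl E M HE HM.
  have Hc := Hall _ Hsl; rewrite negbK in Hc.
  have HMs : simple_edges M by move=> f /(subsetP HM.1) /HE.
  have -> : M :&: cut E XT = [set f in M | #|f :&: XT| == 1].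
    apply/setP => f; rewrite !inE; case Hf: (f \in M) => //=.
    by rewrite (subsetP HM.1 _ Hf).
  rewrite card_sl //; transitivity (count (cross X) (sl M)); last exact/eqP.
  apply: eq_in_count => e /sl_Kp He /=.
  case/Kp_lt: He => Ha Hb Hab.
  rewrite card2I; last by rewrite eq_psi // phiK.
  rewrite !inE !phiK // /cross.
  by case: (nth false X e.1); case: (nth false X e.2).
move: Hn; rewrite /nontriv.
case: (Ht _ Htc) => H1.
  by move: H1; rewrite card_phi => ->.
have E1 : ~: XT = [set x | ~~ nth false X (phi x)] by apply/setP => x; rewrite !inE.
by move: H1; rewrite E1 (card_phi (fun i => ~~ nth false X i)) => ->; rewrite andbF.
Qed.

Lemma wl_from (E : {set {set T}}) : simple_edges E -> wheel_like E -> wl_b (sl E).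
Proof.
move=> HE [h [Hrem Hdbl]].
rewrite /wl_b hasSE; apply/hasP; exists (phi h); first by rewrite mem_iota phi_lt.
apply/andP; split; rewrite allSE; apply/allP.
  move=> f; rewrite mem_filter => /andP[/andP[Hm1 Hm2] Hf].
  have HK := sl_Kp Hf.
  rewrite -pms_rm -sl_rm // in Hm1 Hm2.
  have Hmc := mc_sound (simple_rm HE) Hm1 Hm2.
  have : removable E (eK f) by split => //; rewrite -sl_mem.
  by move/Hrem; rewrite inK_mem.
move=> [a b]; rewrite mem_filter => /andP[/= /andP[Hab /andP[Hm1 Hm2]]].
case/allpairsP => [[a' b']] [/= Ha Hb [Ea Eb]]; subst a' b'.
move: Ha Hb; rewrite !mem_filter => /andP[Na /andP[HaE HKa]] /andP[Nb /andP[HbE HKb]].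
rewrite -!pms_rm -sl_rm // -sl_rm // in Hm1 Hm2.
rewrite -pms_rm -sl_rm // in Na; rewrite -pms_rm -sl_rm // in Nb.
have : removable_doubleton E (eK a) (eK b).
  split; first by [].
  split; first by [].
  split; first by rewrite (inj_in_eq eK_inj).
  split; first exact: (mc_sound (simple_rm (simple_rm HE)) Hm1 Hm2).
  split; first by move=> /(mc_complete (simple_rm HE)) H; move/negP: Na; apply.
  by move=> /(mc_complete (simple_rm HE)) H; move/negP: Nb; apply.
by case/Hdbl => H; rewrite !inK_mem // in H; rewrite H ?orbT.
Qed.

Lemma wl_to (E : {set {set T}}) : simple_edges E -> wlrev_b (sl E) -> wheel_like E.
Proof.
move=> HE; rewrite /wlrev_b hasSE => /hasP[hv]; rewrite mem_iota => /andP[_ Hh].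
move=> /andP[]; rewrite !allSE => /allP HR /allP HD.
exists (psi hv); split.
  move=> f [Hf Hmc]; case: (eK_surj (HE f Hf)) => e HK Ef; subst f.
  rewrite inK_mem // phiK //; apply: HR.
  rewrite mem_filter sl_mem // Hf andbT -pms_rm -sl_rm //.
  exact: mc_complete (simple_rm HE) Hmc.
move=> f f' [Hf [Hf' [Hff [Hmc [Hn1 Hn2]]]]].
case: (eK_surj (HE f Hf)) => a HKa Ef; subst f.
case: (eK_surj (HE f' Hf')) => b HKb Ef; subst f'.
rewrite !inK_mem // !phiK //.
move: (HD (a, b)) => /= HDab; apply/orP; apply: HDab; rewrite mem_filter /=; apply/andP; split.
  apply/andP; split; first by rewrite -(inj_in_eq eK_inj).
  rewrite -!pms_rm -sl_rm // -sl_rm //.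
  exact: mc_complete (simple_rm (simple_rm HE)) Hmc.
apply/allpairsP; exists (a, b) => /=; split => //; rewrite mem_filter.
  rewrite sl_mem // Hf andbT -pms_rm -sl_rm //; apply/negP => /andP[H1 H2].
  by apply: Hn1; exact: mc_sound (simple_rm HE) H1 H2.
rewrite sl_mem // Hf' andbT -pms_rm -sl_rm //; apply/negP => /andP[H1 H2].
by apply: Hn2; exact: mc_sound (simple_rm HE) H1 H2.
Qed.

End Bridge.


Lemma set2_eq (A : finType) (a b c d : A) :
  [set a; b] = [set c; d] -> (a = c /\ b = d) \/ (a = d /\ b = c).
Proof.
move=> H.
have : a \in [set c; d] by rewrite -H set21.
have : b \in [set c; d] by rewrite -H set22.
have : c \in [set a; b] by rewrite H set21.
have : d \in [set a; b] by rewrite H set22.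
rewrite !inE => /orP[]/eqP H1 /orP[]/eqP H2 /orP[]/eqP H3 /orP[]/eqP H4; subst;
  first [by left | by right].
Qed.

Lemma w5n_sym a b : w5n a b = w5n b a.
Proof.
rewrite /w5n eq_sym; case: (b != a) => //=.
by case: (a == 0); case: (b == 0) => //=; rewrite orbC.
Qed.

Lemma w5adjE (i j : 'I_6) : w5adj i j = w5n i j.
Proof. by []. Qed.

Lemma W5_mem (a b : 'I_6) : ([set a; b] \in W5) = w5adj a b.
Proof.
apply/imsetP/idP.
  case=> [[c d]]; rewrite inE /= => Hcd /set2_eq [[-> ->]|[-> ->]] //.
  by rewrite !w5adjE w5n_sym.
by move=> H; exists (a, b) => //; rewrite inE.
Qed.

Theorem mainTheorem6 (T : finType) (E : {set {set T}})
  (Hsimple : simple_edges E) (H6 : #|T| = 6)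
  (Hplanar : planar E) (Hbrick : brick E) :
  wheel_like E <-> isomorphic E W5.
Proof.
have : 0 < #|T| by rewrite H6.
case/card_gt0P => x0 _.
case: Hbrick => Hmc [_ Htight].
split.
  move=> Hwl.
  have Hg := filter_allsub (fun e => eK T x0 e \in E) Kp.
  have := main_comp; rewrite /main_b allSE => /allP/(_ _ Hg).
  rewrite -/(sl T x0 E).
  rewrite (mc_complete _ x0 H6 Hsimple Hmc) (tight_from _ x0 H6 _ Hsimple Htight) (wl_from _ x0 H6 _ Hsimple Hwl).
  rewrite hasSE => /hasP[pi Hpi Hiso].
  move: Hpi; rewrite mem_filter => /andP[Hu /allLP[Hs Hall]].
  have Hlt : forall i, i < 6 -> nth 0 pi i < 6.
    by move=> i Hi; apply: (allP Hall); rewrite mem_nth // Hs.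
  pose phiW (x : T) : 'I_6 := inord (nth 0 pi (phi T x)).
  have HW x : nat_of_ord (phiW x) = nth 0 pi (phi T x) by rewrite /phiW inordK ?Hlt ?phi_lt.
  exists phiW; split.
    apply: inj_card_bij; last by rewrite card_ord H6.
    move=> x y /(congr1 (@nat_of_ord 6)); rewrite !HW => /eqP.
    rewrite nth_uniq ?Hs ?phi_lt // => /eqP Hxy.
    by rewrite -(psiK _ x0 x) Hxy psiK.
  move=> x y; case: (eqVneq x y) => [<-|Hxy].
    rewrite W5_mem /w5adj eqxx /=; apply/negP => /Hsimple.
    by rewrite setUid cards1.
  case: (eK_pair _ x0 H6 _ _ Hxy) => e HK He.
  have Exy : [set x; y] = eK T x0 e.
    by case: He => ->; rewrite /eK /= !psiK // setUC.
  rewrite Exy -sl_mem // W5_mem w5adjE !HW.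
  move: Hiso; rewrite /iso_check allSE => /allP/(_ e HK); rewrite memSE => /eqP ->.
  by case: He => -> //=; rewrite w5n_sym.
case=> phiI [Hbij Hedge].
have Hinj := bij_inj Hbij.
pose pi := [seq val (phiI (psi T x0 i)) | i <- iota 0 6].
have Hpi : pi \in perms6.
  rewrite mem_filter; apply/andP; split.
    rewrite map_inj_in_uniq ?iota_uniq //.
    move=> i j; rewrite !mem_iota => /andP[_ Hi] /andP[_ Hj] /val_inj /Hinj Hij.
    by rewrite -(phiK _ x0 H6 _ Hi) Hij phiK.
  apply/allLP; split; first by rewrite size_map size_iota.
  by apply/allP => z /mapP[i _ ->]; exact: ltn_ord.
have Hsl : sl T x0 E = w5rel pi.
  rewrite /sl /w5rel; apply: eq_in_filter => e He.
  case/Kp_lt: He => Ha Hb _.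
  rewrite /eK Hedge W5_mem w5adjE /pi !(nth_map 0) ?size_iota // !nth_iota //.
apply: (wl_to _ x0 H6 _ Hsimple); rewrite Hsl.
by have := rev_comp; rewrite allSE => /allP; apply.
Qed.
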